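(* Let $N\geq 10^{100000}$ be a real number and $f_N(x)=\dfrac{\log N+\log(x-1)}{\log x}$ for real $x>1$. Let $M\geq 10^5$ be a real number. Then for every $x$ with $M\leq x\leq 2M$ and every $1\leq k\leq 6$, $$0.999999<\frac{f_N^{(k)}(M)}{f_N^{(k)}(x)}<\gamma_k,$$ where $\gamma_1=2.24808$, $\gamma_2=4.53426$, $\gamma_3=9.11515$, $\gamma_4=18.2994$, $\gamma_5=36.7099$, $\gamma_6=73.6077$.
   Context: $f_N^{(k)}$ denotes the $k$-th derivative of $f_N$; $\log$ is the natural logarithm. *)

(* Defs.v *)
From Stdlib Require Import Reals ZArith.
From Coquelicot Require Import Coquelicot.
Open Scope R_scope.

(* Outside x > 1 the total Stdlib ln gives junk values, but derivatives at
   points x > 1 only depend on the function near x, where it is the true f_N. *)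
Definition fN (N x : R) : R := (ln N + ln (x - 1)) / ln x.

Definition gamma (k : nat) : R :=
  match k with
  | 1%nat => 2.24808
  | 2%nat => 4.53426
  | 3%nat => 9.11515
  | 4%nat => 18.2994
  | 5%nat => 36.7099
  | 6%nat => 73.6077
  | _ => 0
  end.

(* Main.v *)
Require Import Defs.
From Stdlib Require Import Reals ZArith.
From Coquelicot Require Import Coquelicot.
From Stdlib Require Import Lra Lia List.
Import ListNotations.
Open Scope R_scope.

Definition Sp (k:nat) (t:R) : R := match k with
  | 0%nat => t
  | 1%nat => 1 * t^2
  | 2%nat => 1 * t^2 + 2 * t^3
  | 3%nat => 2 * t^2 + 6 * t^3 + 6 * t^4
  | 4%nat => 6 * t^2 + 22 * t^3 + 36 * t^4 + 24 * t^5
  | 5%nat => 24 * t^2 + 100 * t^3 + 210 * t^4 + 240 * t^5 + 120 * t^6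
  | 6%nat => 120 * t^2 + 548 * t^3 + 1350 * t^4 + 2040 * t^5 + 1800 * t^6 + 720 * t^7
  | _ => 0 end.
Definition Tp (k:nat) (d t:R) : R := match k with
  | 1%nat => 1 * ((1+d)^1 - 1) * (t)
  | 2%nat => 2 * ((1+d)^1 - 1) * (1 * t^2) + 1 * ((1+d)^2 - 1) * (t)
  | 3%nat => 3 * ((1+d)^1 - 1) * (1 * t^2 + 2 * t^3) + 3 * ((1+d)^2 - 1) * (1 * t^2) + 2 * ((1+d)^3 - 1) * (t)
  | 4%nat => 4 * ((1+d)^1 - 1) * (2 * t^2 + 6 * t^3 + 6 * t^4) + 6 * ((1+d)^2 - 1) * (1 * t^2 + 2 * t^3) + 8 * ((1+d)^3 - 1) * (1 * t^2) + 6 * ((1+d)^4 - 1) * (t)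
  | 5%nat => 5 * ((1+d)^1 - 1) * (6 * t^2 + 22 * t^3 + 36 * t^4 + 24 * t^5) + 10 * ((1+d)^2 - 1) * (2 * t^2 + 6 * t^3 + 6 * t^4) + 20 * ((1+d)^3 - 1) * (1 * t^2 + 2 * t^3) + 30 * ((1+d)^4 - 1) * (1 * t^2) + 24 * ((1+d)^5 - 1) * (t)
  | 6%nat => 6 * ((1+d)^1 - 1) * (24 * t^2 + 100 * t^3 + 210 * t^4 + 240 * t^5 + 120 * t^6) + 15 * ((1+d)^2 - 1) * (6 * t^2 + 22 * t^3 + 36 * t^4 + 24 * t^5) + 40 * ((1+d)^3 - 1) * (2 * t^2 + 6 * t^3 + 6 * t^4) + 90 * ((1+d)^4 - 1) * (1 * t^2 + 2 * t^3) + 144 * ((1+d)^5 - 1) * (1 * t^2) + 120 * ((1+d)^6 - 1) * (t)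
  | _ => 0 end.
Definition F (k:nat) (L x : R) : R :=
  (-1)^k / x^k * ((L + ln (x-1) - ln x) * Sp k (/ ln x) - Tp k (/(x-1)) (/ ln x)).

Lemma ln_pos' x : 1 < x -> 0 < ln x.
Proof. intro; rewrite <- ln_1; apply ln_increasing; lra. Qed.

Lemma der0 N x : 1 < x -> is_derive (fN N) x (F 1 (ln N) x).
Proof.
  intro Hx. assert (0 < ln x) by (apply ln_pos'; auto).
  unfold fN, F, Sp, Tp. auto_derive.
  - repeat split; try lra.
  - unfold Rminus. field. repeat split; lra.
Qed.
Lemma der1 L x : 1 < x -> is_derive (F 1 L) x (F 2 L x).
Proof.
  intros Hx. assert (0 < ln x) by (apply ln_pos'; auto).
  assert (0 < x) by lra. assert (0 < x - 1) by lra.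
  unfold F, Sp, Tp; auto_derive.
  - repeat split; try lra; repeat apply Rmult_integral_contrapositive_currified; lra.
  - unfold Rminus. field. repeat split; lra.
Qed.
Lemma der2 L x : 1 < x -> is_derive (F 2 L) x (F 3 L x).
Proof.
  intros Hx. assert (0 < ln x) by (apply ln_pos'; auto).
  assert (0 < x) by lra. assert (0 < x - 1) by lra.
  unfold F, Sp, Tp; auto_derive.
  - repeat split; try lra; repeat apply Rmult_integral_contrapositive_currified; lra.
  - unfold Rminus. field. repeat split; lra.
Qed.
Lemma der3 L x : 1 < x -> is_derive (F 3 L) x (F 4 L x).
Proof.
  intros Hx. assert (0 < ln x) by (apply ln_pos'; auto).
  assert (0 < x) by lra. assert (0 < x - 1) by lra.
  unfold F, Sp, Tp; auto_derive.
  - repeat split; try lra; repeat apply Rmult_integral_contrapositive_currified; lra.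
  - unfold Rminus. field. repeat split; lra.
Qed.
Lemma der4 L x : 1 < x -> is_derive (F 4 L) x (F 5 L x).
Proof.
  intros Hx. assert (0 < ln x) by (apply ln_pos'; auto).
  assert (0 < x) by lra. assert (0 < x - 1) by lra.
  unfold F, Sp, Tp; auto_derive.
  - repeat split; try lra; repeat apply Rmult_integral_contrapositive_currified; lra.
  - unfold Rminus. field. repeat split; lra.
Qed.
Lemma der5 L x : 1 < x -> is_derive (F 5 L) x (F 6 L x).
Proof.
  intros Hx. assert (0 < ln x) by (apply ln_pos'; auto).
  assert (0 < x) by lra. assert (0 < x - 1) by lra.
  unfold F, Sp, Tp; auto_derive.
  - repeat split; try lra; repeat apply Rmult_integral_contrapositive_currified; lra.
  - unfold Rminus. field. repeat split; lra.
Qed.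
Lemma derk k L x : (1 <= k <= 5)%nat -> 1 < x -> is_derive (F k L) x (F (S k) L x).
Proof.
  intros Hk Hx. destruct k as [|[|[|[|[|[|k]]]]]]; try lia.
  - apply der1; auto.
  - apply der2; auto.
  - apply der3; auto.
  - apply der4; auto.
  - apply der5; auto.
Qed.

Lemma Dn N k x : (1 <= k <= 6)%nat -> 1 < x -> Derive_n (fN N) k x = F k (ln N) x.
Proof.
  revert x. induction k as [|k IH]; intros x Hk Hx. lia.
  destruct k as [|k].
  - simpl. apply is_derive_unique, der0; auto.
  - change (Derive (Derive_n (fN N) (S k)) x = F (S (S k)) (ln N) x).
    rewrite (Derive_ext_loc _ (F (S k) (ln N))).
    + apply is_derive_unique, derk; auto; lia.
    + apply (locally_open (fun t => 1 < t)); [apply open_gt | | exact Hx].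
      intros t Ht; apply IH; auto; lia.
Qed.

Lemma eb j d : 0 <= d <= 1/100 -> (j <= 50)%nat -> 0 <= (1+d)^j - 1 <= 2 * INR j * d.
Proof.
  intros Hd Hj. induction j as [|j IH].
  - simpl; lra.
  - assert (IH' := IH ltac:(lia)). rewrite S_INR. simpl pow.
    assert (INR j <= 50) by (replace 50 with (INR 50) by (simpl; lra); apply le_INR; lia).
    assert (0 <= INR j) by apply pos_INR.
    split; nra.
Qed.

Lemma tpow n t : 0 <= t <= 1/10 -> 0 <= t^(S (S n)) <= (1/10)^n * t^2.
Proof.
  intros Ht. replace (t^(S (S n))) with (t^n * t^2) by (simpl; ring).
  assert (0 <= t^n) by (apply pow_le; lra).
  assert (t^n <= (1/10)^n) by (apply pow_incr; lra).
  assert (0 <= t^2) by (apply pow_le; lra).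
  split; nra.
Qed.

Lemma ebt j n d t : 0 <= d <= 1/99999 -> 0 <= t <= 1/10 ->
  0 <= (1+d)^j - 1 <= 2 * INR j * d -> 0 <= t^(S (S n)) <= (1/10)^n * t^2 ->
  0 <= ((1+d)^j - 1) * t^(S (S n)) <= (2 * INR j / 99999) * ((1/10)^n * t^2).
Proof.
  intros Hd Ht E W. assert (0 <= INR j) by apply pos_INR.
  split. apply Rmult_le_pos; lra.
  apply Rmult_le_compat; try lra.
  apply Rle_trans with (2 * INR j * d); [lra|].
  unfold Rdiv. nra.
Qed.

Lemma ebt1 j d t : 0 <= d -> 0 <= t -> d <= 12/100000 * t ->
  0 <= (1+d)^j - 1 <= 2 * INR j * d ->
  0 <= ((1+d)^j - 1) * t <= 2 * INR j * (12/100000) * t^2.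
Proof.
  intros Hd Ht Hq E. assert (0 <= INR j) by apply pos_INR.
  split. apply Rmult_le_pos; lra.
  apply Rle_trans with (2 * INR j * d * t). apply Rmult_le_compat_r; lra.
  assert (0 <= (12/100000 * t - d) * (2 * INR j * t)) by (apply Rmult_le_pos; nra).
  simpl. nra.
Qed.

Ltac hpos_le := match goal with
  | |- 0 <= ?c + ?y * ?r => apply Rplus_le_le_0_compat; [lra | apply Rmult_le_pos; [lra | hpos_le]]
  | |- _ => lra end.
Ltac hpos := match goal with
  | |- 0 < ?c + ?y * ?r => apply Rplus_lt_le_0_compat; [lra | apply Rmult_le_pos; [lra | hpos_le]] end.
Fixpoint tm (y:R) (m:nat) : R := match m with 0%nat => 1 | S m' => tm y m' * y / IZR (Z.of_nat (S m')) end.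

Lemma tm_eq y m : y^m / INR (fact m) = tm y m.
Proof.
  induction m as [|m IH]; cbn [tm].
  - simpl. field.
  - rewrite <- IH. rewrite fact_simpl, mult_INR, <- tech_pow_Rmult, <- INR_IZR_INZ.
    assert (INR (S m) <> 0) by (apply not_0_INR; lia).
    assert (INR (fact m) <> 0) by (apply INR_fact_neq_0).
    field. split; auto.
Qed.

Lemma Dn_exp n x : Derive_n exp n x = exp x.
Proof.
  revert x; induction n as [|n IH]; intro x; simpl; auto.
  rewrite (Derive_ext _ exp _ IH). apply is_derive_unique, is_derive_exp.
Qed.

Lemma exp_le_taylor y n : 0 < y ->
  exp y * (1 - y ^ S n / INR (fact (S n))) <= sum_f_R0 (fun m => y^m / INR (fact m)) n.
Proof.
  intro Hy.
  destruct (Taylor_Lagrange exp n 0 y Hy) as [z [[Hz1 Hz2] E]].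
  { intros t _ k _. destruct k; simpl. exact I.
    apply ex_derive_ext with (f := exp). intro; symmetry; apply Dn_exp.
    eexists; apply is_derive_exp. }
  rewrite Rminus_0_r in E. rewrite Dn_exp in E.
  assert (E2: sum_f_R0 (fun m => y ^ m / INR (fact m) * Derive_n exp m 0) n = sum_f_R0 (fun m => y ^ m / INR (fact m)) n).
  { apply sum_eq. intros; rewrite Dn_exp, exp_0; ring. }
  rewrite E2 in E.
  assert (exp z < exp y) by (apply exp_increasing; auto).
  assert (0 < y ^ S n / INR (fact (S n))).
  { apply Rdiv_lt_0_compat. apply pow_lt; auto. apply lt_0_INR, lt_O_fact. }
  nra.
Qed.

Lemma sum_tm y n : sum_f_R0 (fun m => y^m / INR (fact m)) n = sum_f_R0 (tm y) n.
Proof. apply sum_eq; intros; apply tm_eq. Qed.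

Lemma exp_ub_of y n B : 0 < y -> 
  sum_f_R0 (tm y) n <= B * (1 - tm y (S n)) -> 0 < 1 - tm y (S n) -> exp y <= B.
Proof.
  intros Hy HS Hr.
  pose proof (exp_le_taylor y n Hy) as H. rewrite sum_tm, tm_eq in H.
  apply Rmult_le_reg_r with (1 - tm y (S n)); lra.
Qed.

Lemma exp_lb_of y n B : 0 <= y -> B <= sum_f_R0 (tm y) n -> B <= exp y.
Proof. intros Hy H. pose proof (exp_ge_taylor y n Hy). rewrite sum_tm in H0. lra. Qed.

Lemma ln_lb_of y z : 0 < z -> exp y <= z -> y <= ln z.
Proof. intros Hz H. rewrite <- (ln_exp y). apply ln_le; auto. apply exp_pos. Qed.

Lemma ln_ub_of y z : 0 < z -> z <= exp y -> ln z <= y.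
Proof. intros Hz H. rewrite <- (ln_exp y). apply ln_le; auto. Qed.

Lemma ln2_lb : 1588/2291 <= ln 2.
Proof.
  apply ln_lb_of; [lra|]. apply (exp_ub_of _ 11); [lra | simpl; lra | simpl; lra].
Qed.

Lemma ln2_ub : ln 2 <= 2731/3940.
Proof.
  apply ln_ub_of; [lra|]. apply (exp_lb_of _ 11); [lra | simpl; lra].
Qed.

Lemma ln54_lb : 223143/1000000 <= ln (5/4).
Proof.
  apply ln_lb_of; [lra|]. apply (exp_ub_of _ 7); [lra | simpl; lra | simpl; lra].
Qed.

Lemma ln54_ub : ln (5/4) <= 22315/100000.
Proof.
  apply ln_ub_of; [lra|]. apply (exp_lb_of _ 5); [lra | simpl; lra].
Qed.

Lemma ln10_eq : ln 10 = 3 * ln 2 + ln (5/4).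
Proof.
  replace 10 with (2 * (2 * (2 * (5/4)))) by field.
  rewrite !ln_mult by lra. ring.
Qed.

Lemma ln10_lb : 2302584/1000000 <= ln 10.
Proof. rewrite ln10_eq. pose proof ln2_lb. pose proof ln54_lb. lra. Qed.

Lemma ln10_ub : ln 10 <= 23026/10000.
Proof. rewrite ln10_eq. pose proof ln2_ub. pose proof ln54_ub. lra. Qed.

Lemma ln1e5 : 287823/25000 <= ln 100000 <= 11513/1000.
Proof.
  replace 100000 with (10^5) by ring. rewrite ln_pow by lra. simpl INR.
  pose proof ln10_lb; pose proof ln10_ub. lra.
Qed.

Lemma pow10E : IZR (10 ^ 100000)%Z = 10 ^ (Z.to_nat 100000).
Proof. rewrite pow_IZR, Z2Nat.id by lia. reflexivity. Qed.
Lemma lnN N : IZR (10 ^ 100000)%Z <= N -> 230258 <= ln N.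
Proof.
  intro HN. rewrite pow10E in HN.
  assert (Hn : INR (Z.to_nat 100000) = 100000) by (rewrite INR_IZR_INZ, Z2Nat.id by lia; reflexivity).
  revert HN Hn. generalize (Z.to_nat 100000). intros n HN Hn.
  assert (P : 0 < 10 ^ n) by (apply pow_lt; lra).
  assert (Hl : ln (10 ^ n) <= ln N) by (apply ln_le; lra).
  rewrite ln_pow in Hl by lra.
  rewrite Hn in Hl. pose proof ln10_lb. lra.
Qed.

Lemma ln_le_sub1 z : 0 < z -> ln z <= z - 1.
Proof.
  intro Hz. pose proof (exp_ineq1_le (z - 1)).
  rewrite <- (ln_exp (z-1)). apply ln_le; lra.
Qed.

Lemma dq y : 100000 <= y -> ln y <= 12/100000 * (y - 1).
Proof.
  intro Hy.
  replace y with (100000 * (y / 100000)) at 1 by field.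
  rewrite ln_mult by (try apply Rdiv_lt_0_compat; lra).
  pose proof (ln_le_sub1 (y/100000) ltac:(apply Rdiv_lt_0_compat; lra)).
  pose proof ln1e5. lra.
Qed.

Lemma Bbounds L y : 100000 <= y -> L - /(y-1) <= L + ln (y-1) - ln y <= L.
Proof.
  intro Hy. split.
  - assert (ln y - ln (y-1) <= /(y-1)).
    { replace y with ((y-1) * (1 + /(y-1))) at 1 by (field; lra).
      rewrite ln_mult by (try lra; assert (0 < /(y-1)) by (apply Rinv_0_lt_compat; lra); lra).
      pose proof (ln_le_sub1 (1 + /(y-1))).
      assert (0 < /(y-1)) by (apply Rinv_0_lt_compat; lra).
      specialize (H ltac:(lra)). lra. }
    lra.
  - assert (ln (y-1) <= ln y) by (apply ln_le; lra). lra.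
Qed.

Lemma Bmono L M x : 100000 <= M -> M <= x -> L + ln (M-1) - ln M <= L + ln (x-1) - ln x.
Proof.
  intros HM Hx.
  assert (ln (M-1) + ln x <= ln (x-1) + ln M).
  { rewrite <- !ln_mult by lra. apply ln_le. nra. nra. }
  lra.
Qed.

Ltac smono := intros t1 t2 Ht; unfold Sp;
  repeat apply Rplus_le_compat; apply Rmult_le_compat_l; try lra; apply pow_incr; lra.
Ltac spos := intros t Ht; unfold Sp;
  repeat apply Rplus_lt_0_compat; apply Rmult_lt_0_compat; try lra; apply pow_lt; lra.

Lemma assemble k g L M x :
  (forall t1 t2, 0 <= t1 <= t2 -> Sp k t1 <= Sp k t2) ->
  (forall t, 0 < t -> 0 < Sp k t) ->
  (forall d t, 0 < t <= 1/10 -> 0 < d <= 1/99999 -> d <= 12/100000 * t -> 0 <= Tp k d t <= 1/100 * Sp k t) ->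
  (forall a, 287823/25000 <= a -> 2^k * Sp k (/a) < g * (1 - 1/20000000) * Sp k (/(a + 2731/3940))) ->
  230258 <= L -> 100000 <= M -> M <= x <= 2*M ->
  999999/1000000 < F k L M / F k L x < g.
Proof.
  intros Smono Spos Tb Poly HL HM Hx.
  pose proof ln1e5 as H5.
  assert (lnM : 287823/25000 <= ln M) by (apply Rle_trans with (ln 100000); [lra | apply ln_le; lra]).
  assert (lnxM : ln M <= ln x) by (apply ln_le; lra).
  assert (lnx2 : ln x <= ln M + 2731/3940).
  { apply Rle_trans with (ln (2 * M)). apply ln_le; lra.
    rewrite ln_mult by lra. pose proof ln2_ub. lra. }
  assert (HtM : 0 < / ln M <= 1/10).
  { split. apply Rinv_0_lt_compat; lra.
    replace (1/10) with (/10) by field. apply Rinv_le_contravar; lra. }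
  assert (Htx : 0 < / ln x <= / ln M).
  { split. apply Rinv_0_lt_compat; lra. apply Rinv_le_contravar; lra. }
  assert (Ht2 : 0 < /(ln M + 2731/3940) <= / ln x).
  { split. apply Rinv_0_lt_compat; lra. apply Rinv_le_contravar; lra. }
  assert (HdM : 0 < /(M-1) <= 1/99999).
  { split. apply Rinv_0_lt_compat; lra.
    replace (1/99999) with (/99999) by field. apply Rinv_le_contravar; lra. }
  assert (Hdx : 0 < /(x-1) <= /(M-1)).
  { split. apply Rinv_0_lt_compat; lra. apply Rinv_le_contravar; lra. }
  assert (qM : /(M-1) <= 12/100000 * / ln M).
  { pose proof (dq M HM). apply Rmult_le_reg_r with (ln M * (M-1)). nra.
    field_simplify; try lra. }
  assert (qx : /(x-1) <= 12/100000 * / ln x).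
  { pose proof (dq x ltac:(lra)). apply Rmult_le_reg_r with (ln x * (x-1)). nra.
    field_simplify; try lra. }
  pose proof (Bbounds L M HM) as BM. pose proof (Bbounds L x ltac:(lra)) as Bx.
  pose proof (Bmono L M x HM ltac:(lra)) as Bmo.
  set (tM := / ln M) in *. set (tx := / ln x) in *. set (t2 := /(ln M + 2731/3940)) in *.
  set (dM := /(M-1)) in *. set (dx := /(x-1)) in *.
  set (bM := L + ln (M-1) - ln M) in *. set (bx := L + ln (x-1) - ln x) in *.
  pose proof (Tb dM tM HtM ltac:(lra) qM) as TM.
  pose proof (Tb dx tx ltac:(lra) ltac:(lra) qx) as Tx.
  pose proof (Spos tM ltac:(lra)) as SMp. pose proof (Spos tx ltac:(lra)) as Sxp.
  pose proof (Spos t2 ltac:(lra)) as S2p.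
  pose proof (Smono tx tM ltac:(lra)) as SxM. pose proof (Smono t2 tx ltac:(lra)) as S2x.
  pose proof (Poly (ln M) lnM) as PM. fold tM t2 in PM.
  set (SM := Sp k tM) in *. set (Sx := Sp k tx) in *. set (S2 := Sp k t2) in *.
  set (TTM := Tp k dM tM) in *. set (TTx := Tp k dx tx) in *.
  assert (HMp : 0 < bM * SM - TTM) by nra.
  assert (Hxp : 0 < bx * Sx - TTx) by nra.
  assert (EF : F k L M / F k L x = (x^k * (bM * SM - TTM)) / (M^k * (bx * Sx - TTx))).
  { unfold F. fold tM tx dM dx bM bx. fold SM Sx TTM TTx.
    assert ((-1)^k <> 0) by (apply pow_nonzero; lra).
    assert (M^k <> 0) by (apply pow_nonzero; lra).
    assert (x^k <> 0) by (apply pow_nonzero; lra).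
    field. repeat split; lra. }
  rewrite EF.
  assert (Mk : 0 < M^k) by (apply pow_lt; lra).
  assert (xMk : M^k <= x^k) by (apply pow_incr; lra).
  assert (xMk2 : x^k <= 2^k * M^k) by (rewrite <- Rpow_mult_distr; apply pow_incr; lra).
  assert (D : 0 < M^k * (bx * Sx - TTx)) by (apply Rmult_lt_0_compat; lra).
  split.
  - apply (proj1 (Rlt_div_r (999999/1000000) (x^k * (bM * SM - TTM)) (M^k * (bx * Sx - TTx)) ltac:(lra))).
    assert (bx * Sx - TTx <= L * SM) by nra.
    assert ((L - 101/10000) * SM <= bM * SM - TTM) by nra.
    assert (999999/1000000 * L < L - 101/10000) by lra.
    assert (999999/1000000 * (bx * Sx - TTx) < bM * SM - TTM) by nra.
    assert (M^k * (bM * SM - TTM) <= x^k * (bM * SM - TTM)) by nra.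
    assert (M^k * (999999/1000000 * (bx * Sx - TTx)) < M^k * (bM * SM - TTM)) by (apply Rmult_lt_compat_l; lra).
    lra.
  - apply (proj2 (Rlt_div_l (x^k * (bM * SM - TTM)) g (M^k * (bx * Sx - TTx)) ltac:(lra))).
    assert (bM * SM - TTM <= bx * SM) by nra.
    assert (bx * (1 - 1/20000000) * S2 <= bx * Sx - TTx) by nra.
    assert (x^k * (bM * SM - TTM) <= 2^k * M^k * (bx * SM)) by nra.
    assert (0 < M^k * bx) by nra.
    assert (2^k * SM * (M^k * bx) < g * (1 - 1/20000000) * S2 * (M^k * bx)) by (apply Rmult_lt_compat_r; lra).
    assert (0 < 2^k) by (apply pow_lt; lra).
    assert (0 < 2^k * SM) by (apply Rmult_lt_0_compat; lra).
    assert (Hg : 0 < g).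
    { destruct (Rle_lt_dec g 0) as [Hg|Hg]; auto.
      assert (g * ((1 - 1/20000000) * S2) <= 0).
      { apply Rmult_le_0_r; [lra | apply Rmult_le_pos; lra]. }
      lra. }
    assert (g * (M^k * (bx * (1 - 1/20000000) * S2)) <= g * (M^k * (bx * Sx - TTx))).
    { apply Rmult_le_compat_l; [lra|]. apply Rmult_le_compat_l; lra. }
    lra.
Qed.
Lemma Tb1 d t : 0 < t <= 1/10 -> 0 < d <= 1/99999 -> d <= 12/100000 * t -> 0 <= Tp 1 d t <= 1/100 * Sp 1 t.
Proof.
  intros Ht Hd Hq. unfold Tp, Sp.
  pose proof (eb 1 d ltac:(lra) ltac:(lia)) as E1.
  pose proof (tpow 0 t ltac:(lra)) as W2.
  pose proof (ebt1 1 d t ltac:(lra) ltac:(lra) ltac:(lra) E1) as P1_1.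
  simpl INR in *. split; lra.
Qed.

Lemma Tb2 d t : 0 < t <= 1/10 -> 0 < d <= 1/99999 -> d <= 12/100000 * t -> 0 <= Tp 2 d t <= 1/100 * Sp 2 t.
Proof.
  intros Ht Hd Hq. unfold Tp, Sp.
  pose proof (eb 1 d ltac:(lra) ltac:(lia)) as E1.
  pose proof (eb 2 d ltac:(lra) ltac:(lia)) as E2.
  pose proof (tpow 0 t ltac:(lra)) as W2.
  pose proof (tpow 1 t ltac:(lra)) as W3.
  pose proof (ebt 1 0 d t ltac:(lra) ltac:(lra) E1 W2) as P1_2.
  pose proof (ebt1 2 d t ltac:(lra) ltac:(lra) ltac:(lra) E2) as P2_1.
  simpl INR in *. split; lra.
Qed.

Lemma Tb3 d t : 0 < t <= 1/10 -> 0 < d <= 1/99999 -> d <= 12/100000 * t -> 0 <= Tp 3 d t <= 1/100 * Sp 3 t.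
Proof.
  intros Ht Hd Hq. unfold Tp, Sp.
  pose proof (eb 1 d ltac:(lra) ltac:(lia)) as E1.
  pose proof (eb 2 d ltac:(lra) ltac:(lia)) as E2.
  pose proof (eb 3 d ltac:(lra) ltac:(lia)) as E3.
  pose proof (tpow 0 t ltac:(lra)) as W2.
  pose proof (tpow 1 t ltac:(lra)) as W3.
  pose proof (tpow 2 t ltac:(lra)) as W4.
  pose proof (ebt 1 0 d t ltac:(lra) ltac:(lra) E1 W2) as P1_2.
  pose proof (ebt 1 1 d t ltac:(lra) ltac:(lra) E1 W3) as P1_3.
  pose proof (ebt 2 0 d t ltac:(lra) ltac:(lra) E2 W2) as P2_2.
  pose proof (ebt1 3 d t ltac:(lra) ltac:(lra) ltac:(lra) E3) as P3_1.
  simpl INR in *. split; lra.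
Qed.

Lemma Tb4 d t : 0 < t <= 1/10 -> 0 < d <= 1/99999 -> d <= 12/100000 * t -> 0 <= Tp 4 d t <= 1/100 * Sp 4 t.
Proof.
  intros Ht Hd Hq. unfold Tp, Sp.
  pose proof (eb 1 d ltac:(lra) ltac:(lia)) as E1.
  pose proof (eb 2 d ltac:(lra) ltac:(lia)) as E2.
  pose proof (eb 3 d ltac:(lra) ltac:(lia)) as E3.
  pose proof (eb 4 d ltac:(lra) ltac:(lia)) as E4.
  pose proof (tpow 0 t ltac:(lra)) as W2.
  pose proof (tpow 1 t ltac:(lra)) as W3.
  pose proof (tpow 2 t ltac:(lra)) as W4.
  pose proof (tpow 3 t ltac:(lra)) as W5.
  pose proof (ebt 1 0 d t ltac:(lra) ltac:(lra) E1 W2) as P1_2.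
  pose proof (ebt 1 1 d t ltac:(lra) ltac:(lra) E1 W3) as P1_3.
  pose proof (ebt 1 2 d t ltac:(lra) ltac:(lra) E1 W4) as P1_4.
  pose proof (ebt 2 0 d t ltac:(lra) ltac:(lra) E2 W2) as P2_2.
  pose proof (ebt 2 1 d t ltac:(lra) ltac:(lra) E2 W3) as P2_3.
  pose proof (ebt 3 0 d t ltac:(lra) ltac:(lra) E3 W2) as P3_2.
  pose proof (ebt1 4 d t ltac:(lra) ltac:(lra) ltac:(lra) E4) as P4_1.
  simpl INR in *. split; lra.
Qed.

Lemma Tb5 d t : 0 < t <= 1/10 -> 0 < d <= 1/99999 -> d <= 12/100000 * t -> 0 <= Tp 5 d t <= 1/100 * Sp 5 t.
Proof.
  intros Ht Hd Hq. unfold Tp, Sp.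
  pose proof (eb 1 d ltac:(lra) ltac:(lia)) as E1.
  pose proof (eb 2 d ltac:(lra) ltac:(lia)) as E2.
  pose proof (eb 3 d ltac:(lra) ltac:(lia)) as E3.
  pose proof (eb 4 d ltac:(lra) ltac:(lia)) as E4.
  pose proof (eb 5 d ltac:(lra) ltac:(lia)) as E5.
  pose proof (tpow 0 t ltac:(lra)) as W2.
  pose proof (tpow 1 t ltac:(lra)) as W3.
  pose proof (tpow 2 t ltac:(lra)) as W4.
  pose proof (tpow 3 t ltac:(lra)) as W5.
  pose proof (tpow 4 t ltac:(lra)) as W6.
  pose proof (ebt 1 0 d t ltac:(lra) ltac:(lra) E1 W2) as P1_2.
  pose proof (ebt 1 1 d t ltac:(lra) ltac:(lra) E1 W3) as P1_3.
  pose proof (ebt 1 2 d t ltac:(lra) ltac:(lra) E1 W4) as P1_4.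
  pose proof (ebt 1 3 d t ltac:(lra) ltac:(lra) E1 W5) as P1_5.
  pose proof (ebt 2 0 d t ltac:(lra) ltac:(lra) E2 W2) as P2_2.
  pose proof (ebt 2 1 d t ltac:(lra) ltac:(lra) E2 W3) as P2_3.
  pose proof (ebt 2 2 d t ltac:(lra) ltac:(lra) E2 W4) as P2_4.
  pose proof (ebt 3 0 d t ltac:(lra) ltac:(lra) E3 W2) as P3_2.
  pose proof (ebt 3 1 d t ltac:(lra) ltac:(lra) E3 W3) as P3_3.
  pose proof (ebt 4 0 d t ltac:(lra) ltac:(lra) E4 W2) as P4_2.
  pose proof (ebt1 5 d t ltac:(lra) ltac:(lra) ltac:(lra) E5) as P5_1.
  simpl INR in *. split; lra.
Qed.

Lemma Tb6 d t : 0 < t <= 1/10 -> 0 < d <= 1/99999 -> d <= 12/100000 * t -> 0 <= Tp 6 d t <= 1/100 * Sp 6 t.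
Proof.
  intros Ht Hd Hq. unfold Tp, Sp.
  pose proof (eb 1 d ltac:(lra) ltac:(lia)) as E1.
  pose proof (eb 2 d ltac:(lra) ltac:(lia)) as E2.
  pose proof (eb 3 d ltac:(lra) ltac:(lia)) as E3.
  pose proof (eb 4 d ltac:(lra) ltac:(lia)) as E4.
  pose proof (eb 5 d ltac:(lra) ltac:(lia)) as E5.
  pose proof (eb 6 d ltac:(lra) ltac:(lia)) as E6.
  pose proof (tpow 0 t ltac:(lra)) as W2.
  pose proof (tpow 1 t ltac:(lra)) as W3.
  pose proof (tpow 2 t ltac:(lra)) as W4.
  pose proof (tpow 3 t ltac:(lra)) as W5.
  pose proof (tpow 4 t ltac:(lra)) as W6.
  pose proof (tpow 5 t ltac:(lra)) as W7.
  pose proof (ebt 1 0 d t ltac:(lra) ltac:(lra) E1 W2) as P1_2.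
  pose proof (ebt 1 1 d t ltac:(lra) ltac:(lra) E1 W3) as P1_3.
  pose proof (ebt 1 2 d t ltac:(lra) ltac:(lra) E1 W4) as P1_4.
  pose proof (ebt 1 3 d t ltac:(lra) ltac:(lra) E1 W5) as P1_5.
  pose proof (ebt 1 4 d t ltac:(lra) ltac:(lra) E1 W6) as P1_6.
  pose proof (ebt 2 0 d t ltac:(lra) ltac:(lra) E2 W2) as P2_2.
  pose proof (ebt 2 1 d t ltac:(lra) ltac:(lra) E2 W3) as P2_3.
  pose proof (ebt 2 2 d t ltac:(lra) ltac:(lra) E2 W4) as P2_4.
  pose proof (ebt 2 3 d t ltac:(lra) ltac:(lra) E2 W5) as P2_5.
  pose proof (ebt 3 0 d t ltac:(lra) ltac:(lra) E3 W2) as P3_2.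
  pose proof (ebt 3 1 d t ltac:(lra) ltac:(lra) E3 W3) as P3_3.
  pose proof (ebt 3 2 d t ltac:(lra) ltac:(lra) E3 W4) as P3_4.
  pose proof (ebt 4 0 d t ltac:(lra) ltac:(lra) E4 W2) as P4_2.
  pose proof (ebt 4 1 d t ltac:(lra) ltac:(lra) E4 W3) as P4_3.
  pose proof (ebt 5 0 d t ltac:(lra) ltac:(lra) E5 W2) as P5_2.
  pose proof (ebt1 6 d t ltac:(lra) ltac:(lra) ltac:(lra) E6) as P6_1.
  simpl INR in *. split; lra.
Qed.
Lemma sumpow r X Y U V : 0 < V -> V <= X <= U -> V <= Y <= U -> X*Y <= U*V ->
  X^r + Y^r <= U^r + V^r.
Proof.
  intros HV HX HY HP.
  assert (0 < V^r) by (apply pow_lt; lra).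
  assert (0 < U^r) by (apply pow_lt; lra).
  assert (X^r <= U^r) by (apply pow_incr; lra).
  assert (Y^r <= U^r) by (apply pow_incr; lra).
  assert (X^r * Y^r <= U^r * V^r).
  { rewrite <- !Rpow_mult_distr. apply pow_incr. split; [|lra].
    apply Rmult_le_pos; lra. }
  assert (0 <= (U^r - X^r) * (U^r - Y^r)) by (apply Rmult_le_pos; lra).
  assert (U^r * (X^r + Y^r) <= U^r * (U^r + V^r)) by nra.
  apply Rmult_le_reg_l with (U^r); lra.
Qed.

Lemma pairmono p q X Y U V : 0 < V -> V <= X <= U -> V <= Y <= U -> X*Y <= U*V ->
  X^p * Y^q + X^q * Y^p <= U^p * V^q + U^q * V^p.
Proof.
  intros HV HX HY HP.
  assert (K : forall p r, X^p * Y^(p+r) + X^(p+r) * Y^p <= U^p * V^(p+r) + U^(p+r) * V^p).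
  { intros p0 r. rewrite !pow_add.
    replace (X ^ p0 * (Y ^ p0 * Y ^ r) + X ^ p0 * X ^ r * Y ^ p0) with ((X*Y)^p0 * (X^r + Y^r)) by (rewrite Rpow_mult_distr; ring).
    replace (U ^ p0 * (V ^ p0 * V ^ r) + U ^ p0 * U ^ r * V ^ p0) with ((U*V)^p0 * (U^r + V^r)) by (rewrite Rpow_mult_distr; ring).
    apply Rmult_le_compat.
    - apply pow_le. apply Rmult_le_pos; lra.
    - assert (0 <= X^r) by (apply pow_le; lra). assert (0 <= Y^r) by (apply pow_le; lra). lra.
    - apply pow_incr. split; [apply Rmult_le_pos; lra | lra].
    - apply sumpow; auto. }
  destruct (Nat.le_ge_cases p q) as [H|H].
  - replace q with (p + (q - p))%nat by lia. apply K.
  - replace p with (q + (p - q))%nat by lia. specialize (K q (p - q)%nat). lra.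
Qed.

Fixpoint Sg (l : list (R * nat)) (t : R) : R :=
  match l with nil => 0 | (c, p) :: l' => c * t^p + Sg l' t end.

Lemma Gm p l X Y U V : 0 < V -> V <= X <= U -> V <= Y <= U -> X*Y <= U*V ->
  Forall (fun cp => 0 <= fst cp) l ->
  X^p * Sg l Y + Sg l X * Y^p <= U^p * Sg l V + Sg l U * V^p.
Proof.
  intros HV HX HY HP Hl. induction Hl as [|[d q] l Hd Hl IH]; simpl.
  - lra.
  - simpl in Hd. pose proof (pairmono p q X Y U V HV HX HY HP).
    assert (d * (X ^ p * Y ^ q + X ^ q * Y ^ p) <= d * (U ^ p * V ^ q + U ^ q * V ^ p)) by (apply Rmult_le_compat_l; lra).
    lra.
Qed.

Lemma Fm l1 l2 X Y U V : 0 < V -> V <= X <= U -> V <= Y <= U -> X*Y <= U*V ->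
  Forall (fun cp => 0 <= fst cp) l1 -> Forall (fun cp => 0 <= fst cp) l2 ->
  Sg l1 X * Sg l2 Y + Sg l2 X * Sg l1 Y <= Sg l1 U * Sg l2 V + Sg l2 U * Sg l1 V.
Proof.
  intros HV HX HY HP H1 H2. induction H1 as [|[c p] l1 Hc H1 IH]; simpl.
  - lra.
  - simpl in Hc. pose proof (Gm p l2 X Y U V HV HX HY HP H2).
    assert (c * (X ^ p * Sg l2 Y + Sg l2 X * Y ^ p) <= c * (U ^ p * Sg l2 V + Sg l2 U * V ^ p)) by (apply Rmult_le_compat_l; lra).
    lra.
Qed.

Lemma Smono2 l a a0 l1 : 0 < a0 -> a0 <= a -> 0 < l1 -> Forall (fun cp => 0 <= fst cp) l ->
  Sg l (/a) * Sg l (/(a0 + l1)) <= Sg l (/a0) * Sg l (/(a + l1)).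
Proof.
  intros H0 Ha Hl Hc.
  assert (HV : 0 < /(a + l1)) by (apply Rinv_0_lt_compat; lra).
  assert (/(a+l1) <= /a <= /a0) by (split; apply Rinv_le_contravar; lra).
  assert (/(a+l1) <= /(a0+l1) <= /a0) by (split; apply Rinv_le_contravar; lra).
  assert (/a * /(a0+l1) <= /a0 * /(a+l1)).
  { rewrite <- !Rinv_mult. apply Rinv_le_contravar. apply Rmult_lt_0_compat; lra. nra. }
  pose proof (Fm l l (/a) (/(a0+l1)) (/a0) (/(a+l1)) HV H H1 H2 Hc Hc). lra.
Qed.

Lemma Sp_pos k t : (1 <= k <= 6)%nat -> 0 < t -> 0 < Sp k t.
Proof.
  intros Hk Ht. destruct k as [|[|[|[|[|[|[|k]]]]]]]; try lia; unfold Sp;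
  repeat apply Rplus_lt_0_compat; apply Rmult_lt_0_compat; try lra; apply pow_lt; lra.
Qed.

Lemma Poly1 a : 287823/25000 <= a -> 2^1 * Sp 1 (/a) < (28101/12500) * (1 - 1/20000000) * Sp 1 (/(a + 2731/3940)).
Proof.
  intro Ha.
  assert (E : forall t, Sp 1 t = Sg [(1, 2%nat)] t) by (intro; simpl; ring).
  assert (Hc : Forall (fun cp => 0 <= fst cp) [(1, 2%nat)]) by (repeat constructor; simpl; lra).
  pose proof (Smono2 _ a (287823/25000) (2731/3940) ltac:(lra) Ha ltac:(lra) Hc) as Hm.
  rewrite <- !E in Hm.
  replace (/ (287823/25000)) with (25000/287823) in Hm by field.
  replace (/ (287823/25000 + 2731/3940)) with (4925000/60114881) in Hm by field.
  assert (N : 2^1 * Sp 1 (25000/287823) < (28101/12500) * (1 - 1/20000000) * Sp 1 (4925000/60114881)) by (unfold Sp; lra).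
  assert (P1 : 0 < Sp 1 (/(a + 2731/3940))) by (apply Sp_pos; [lia | apply Rinv_0_lt_compat; lra]).
  assert (P2 : 0 < Sp 1 (4925000/60114881)) by (apply Sp_pos; [lia | lra]).
  assert (2^1 * Sp 1 (25000/287823) * Sp 1 (/(a + 2731/3940)) < (28101/12500) * (1 - 1/20000000) * Sp 1 (4925000/60114881) * Sp 1 (/(a + 2731/3940))) by (apply Rmult_lt_compat_r; lra).
  apply (Rmult_lt_reg_r (Sp 1 (4925000/60114881))); [lra|].
  lra.
Qed.

Lemma Poly2 a : 287823/25000 <= a -> 2^2 * Sp 2 (/a) < (226713/50000) * (1 - 1/20000000) * Sp 2 (/(a + 2731/3940)).
Proof.
  intro Ha.
  assert (E : forall t, Sp 2 t = Sg [(1, 2%nat); (2, 3%nat)] t) by (intro; simpl; ring).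
  assert (Hc : Forall (fun cp => 0 <= fst cp) [(1, 2%nat); (2, 3%nat)]) by (repeat constructor; simpl; lra).
  pose proof (Smono2 _ a (287823/25000) (2731/3940) ltac:(lra) Ha ltac:(lra) Hc) as Hm.
  rewrite <- !E in Hm.
  replace (/ (287823/25000)) with (25000/287823) in Hm by field.
  replace (/ (287823/25000 + 2731/3940)) with (4925000/60114881) in Hm by field.
  assert (N : 2^2 * Sp 2 (25000/287823) < (226713/50000) * (1 - 1/20000000) * Sp 2 (4925000/60114881)) by (unfold Sp; lra).
  assert (P1 : 0 < Sp 2 (/(a + 2731/3940))) by (apply Sp_pos; [lia | apply Rinv_0_lt_compat; lra]).
  assert (P2 : 0 < Sp 2 (4925000/60114881)) by (apply Sp_pos; [lia | lra]).
  assert (2^2 * Sp 2 (25000/287823) * Sp 2 (/(a + 2731/3940)) < (226713/50000) * (1 - 1/20000000) * Sp 2 (4925000/60114881) * Sp 2 (/(a + 2731/3940))) by (apply Rmult_lt_compat_r; lra).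
  apply (Rmult_lt_reg_r (Sp 2 (4925000/60114881))); [lra|].
  lra.
Qed.

Lemma Poly3 a : 287823/25000 <= a -> 2^3 * Sp 3 (/a) < (182303/20000) * (1 - 1/20000000) * Sp 3 (/(a + 2731/3940)).
Proof.
  intro Ha.
  assert (E : forall t, Sp 3 t = Sg [(2, 2%nat); (6, 3%nat); (6, 4%nat)] t) by (intro; simpl; ring).
  assert (Hc : Forall (fun cp => 0 <= fst cp) [(2, 2%nat); (6, 3%nat); (6, 4%nat)]) by (repeat constructor; simpl; lra).
  pose proof (Smono2 _ a (287823/25000) (2731/3940) ltac:(lra) Ha ltac:(lra) Hc) as Hm.
  rewrite <- !E in Hm.
  replace (/ (287823/25000)) with (25000/287823) in Hm by field.
  replace (/ (287823/25000 + 2731/3940)) with (4925000/60114881) in Hm by field.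
  assert (N : 2^3 * Sp 3 (25000/287823) < (182303/20000) * (1 - 1/20000000) * Sp 3 (4925000/60114881)) by (unfold Sp; lra).
  assert (P1 : 0 < Sp 3 (/(a + 2731/3940))) by (apply Sp_pos; [lia | apply Rinv_0_lt_compat; lra]).
  assert (P2 : 0 < Sp 3 (4925000/60114881)) by (apply Sp_pos; [lia | lra]).
  assert (2^3 * Sp 3 (25000/287823) * Sp 3 (/(a + 2731/3940)) < (182303/20000) * (1 - 1/20000000) * Sp 3 (4925000/60114881) * Sp 3 (/(a + 2731/3940))) by (apply Rmult_lt_compat_r; lra).
  apply (Rmult_lt_reg_r (Sp 3 (4925000/60114881))); [lra|].
  lra.
Qed.

Lemma Poly4 a : 287823/25000 <= a -> 2^4 * Sp 4 (/a) < (91497/5000) * (1 - 1/20000000) * Sp 4 (/(a + 2731/3940)).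
Proof.
  intro Ha.
  assert (E : forall t, Sp 4 t = Sg [(6, 2%nat); (22, 3%nat); (36, 4%nat); (24, 5%nat)] t) by (intro; simpl; ring).
  assert (Hc : Forall (fun cp => 0 <= fst cp) [(6, 2%nat); (22, 3%nat); (36, 4%nat); (24, 5%nat)]) by (repeat constructor; simpl; lra).
  pose proof (Smono2 _ a (287823/25000) (2731/3940) ltac:(lra) Ha ltac:(lra) Hc) as Hm.
  rewrite <- !E in Hm.
  replace (/ (287823/25000)) with (25000/287823) in Hm by field.
  replace (/ (287823/25000 + 2731/3940)) with (4925000/60114881) in Hm by field.
  assert (N : 2^4 * Sp 4 (25000/287823) < (91497/5000) * (1 - 1/20000000) * Sp 4 (4925000/60114881)) by (unfold Sp; lra).
  assert (P1 : 0 < Sp 4 (/(a + 2731/3940))) by (apply Sp_pos; [lia | apply Rinv_0_lt_compat; lra]).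
  assert (P2 : 0 < Sp 4 (4925000/60114881)) by (apply Sp_pos; [lia | lra]).
  assert (2^4 * Sp 4 (25000/287823) * Sp 4 (/(a + 2731/3940)) < (91497/5000) * (1 - 1/20000000) * Sp 4 (4925000/60114881) * Sp 4 (/(a + 2731/3940))) by (apply Rmult_lt_compat_r; lra).
  apply (Rmult_lt_reg_r (Sp 4 (4925000/60114881))); [lra|].
  lra.
Qed.

Lemma Poly5 a : 287823/25000 <= a -> 2^5 * Sp 5 (/a) < (367099/10000) * (1 - 1/20000000) * Sp 5 (/(a + 2731/3940)).
Proof.
  intro Ha.
  assert (E : forall t, Sp 5 t = Sg [(24, 2%nat); (100, 3%nat); (210, 4%nat); (240, 5%nat); (120, 6%nat)] t) by (intro; simpl; ring).
  assert (Hc : Forall (fun cp => 0 <= fst cp) [(24, 2%nat); (100, 3%nat); (210, 4%nat); (240, 5%nat); (120, 6%nat)]) by (repeat constructor; simpl; lra).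
  pose proof (Smono2 _ a (287823/25000) (2731/3940) ltac:(lra) Ha ltac:(lra) Hc) as Hm.
  rewrite <- !E in Hm.
  replace (/ (287823/25000)) with (25000/287823) in Hm by field.
  replace (/ (287823/25000 + 2731/3940)) with (4925000/60114881) in Hm by field.
  assert (N : 2^5 * Sp 5 (25000/287823) < (367099/10000) * (1 - 1/20000000) * Sp 5 (4925000/60114881)) by (unfold Sp; lra).
  assert (P1 : 0 < Sp 5 (/(a + 2731/3940))) by (apply Sp_pos; [lia | apply Rinv_0_lt_compat; lra]).
  assert (P2 : 0 < Sp 5 (4925000/60114881)) by (apply Sp_pos; [lia | lra]).
  assert (2^5 * Sp 5 (25000/287823) * Sp 5 (/(a + 2731/3940)) < (367099/10000) * (1 - 1/20000000) * Sp 5 (4925000/60114881) * Sp 5 (/(a + 2731/3940))) by (apply Rmult_lt_compat_r; lra).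
  apply (Rmult_lt_reg_r (Sp 5 (4925000/60114881))); [lra|].
  lra.
Qed.

Lemma Poly6 a : 287823/25000 <= a -> 2^6 * Sp 6 (/a) < (736077/10000) * (1 - 1/20000000) * Sp 6 (/(a + 2731/3940)).
Proof.
  intro Ha.
  assert (E : forall t, Sp 6 t = Sg [(120, 2%nat); (548, 3%nat); (1350, 4%nat); (2040, 5%nat); (1800, 6%nat); (720, 7%nat)] t) by (intro; simpl; ring).
  assert (Hc : Forall (fun cp => 0 <= fst cp) [(120, 2%nat); (548, 3%nat); (1350, 4%nat); (2040, 5%nat); (1800, 6%nat); (720, 7%nat)]) by (repeat constructor; simpl; lra).
  pose proof (Smono2 _ a (287823/25000) (2731/3940) ltac:(lra) Ha ltac:(lra) Hc) as Hm.
  rewrite <- !E in Hm.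
  replace (/ (287823/25000)) with (25000/287823) in Hm by field.
  replace (/ (287823/25000 + 2731/3940)) with (4925000/60114881) in Hm by field.
  assert (N : 2^6 * Sp 6 (25000/287823) < (736077/10000) * (1 - 1/20000000) * Sp 6 (4925000/60114881)) by (unfold Sp; lra).
  assert (P1 : 0 < Sp 6 (/(a + 2731/3940))) by (apply Sp_pos; [lia | apply Rinv_0_lt_compat; lra]).
  assert (P2 : 0 < Sp 6 (4925000/60114881)) by (apply Sp_pos; [lia | lra]).
  assert (2^6 * Sp 6 (25000/287823) * Sp 6 (/(a + 2731/3940)) < (736077/10000) * (1 - 1/20000000) * Sp 6 (4925000/60114881) * Sp 6 (/(a + 2731/3940))) by (apply Rmult_lt_compat_r; lra).
  apply (Rmult_lt_reg_r (Sp 6 (4925000/60114881))); [lra|].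
  lra.
Qed.

Theorem lemma3p2 (N M : R) :
  IZR (10 ^ 100000)%Z <= N ->
  IZR (10 ^ 5)%Z <= M ->
  forall (x : R) (k : nat),
    M <= x <= 2 * M ->
    (1 <= k <= 6)%nat ->
    0.999999 < Derive_n (fN N) k M / Derive_n (fN N) k x < gamma k.
Proof.
  intros HN HM x k Hx Hk.
  pose proof (lnN N HN) as HL. clear HN.
  assert (HM' : 100000 <= M) by (simpl in HM; lra).
  rewrite (Dn N k M Hk ltac:(lra)), (Dn N k x Hk ltac:(lra)).
  replace 0.999999 with (999999/1000000) by (cbv [Q2R]; simpl; lra).
  destruct k as [|[|[|[|[|[|[|k]]]]]]]; try lia; unfold gamma.
  - replace 2.24808 with (28101/12500) by (cbv [Q2R]; simpl; lra).
    apply assemble; auto; [smono | spos | apply Tb1 | apply Poly1].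
  - replace 4.53426 with (226713/50000) by (cbv [Q2R]; simpl; lra).
    apply assemble; auto; [smono | spos | apply Tb2 | apply Poly2].
  - replace 9.11515 with (182303/20000) by (cbv [Q2R]; simpl; lra).
    apply assemble; auto; [smono | spos | apply Tb3 | apply Poly3].
  - replace 18.2994 with (91497/5000) by (cbv [Q2R]; simpl; lra).
    apply assemble; auto; [smono | spos | apply Tb4 | apply Poly4].
  - replace 36.7099 with (367099/10000) by (cbv [Q2R]; simpl; lra).
    apply assemble; auto; [smono | spos | apply Tb5 | apply Poly5].
  - replace 73.6077 with (736077/10000) by (cbv [Q2R]; simpl; lra).
    apply assemble; auto; [smono | spos | apply Tb6 | apply Poly6].
Qed.
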